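(* Let $G$ be a connected graph whose vertex set is partitioned into three stable sets $X$, $Y$, $Z$ such that every vertex of $Y$ is adjacent to every vertex of $Z$, and suppose that every vertex of $X$ has at least one neighbour in $Y$ and at least one neighbour in $Z$. Then $G$ has the de Bruijn-Erd\H{o}s property: the metric space $(V(G), d_G)$ has a universal line or at least $|V(G)|$ distinct lines.
   Context: $d_G$ is the shortest-path distance of $G$. In a metric space $(V,\rho)$, an element $b$ is between $a$ and $c$ if $\rho(a,b)+\rho(b,c)=\rho(a,c)$; three elements are collinear if one of them is between the other two. For distinct $a,b\in V$, the line generated by $a$ and $b$ is the set consisting of $a$, $b$, and all elements $c$ such that $a,b,c$ are collinear. A line is universal if it equals the whole ground set $V$. *)

(* Defs.v *)
From mathcomp Require Import all_boot.
Set Implicit Arguments. Unset Strict Implicit. Unset Printing Implicit Defensive.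

Definition simple_graph (T : finType) (e : rel T) : Prop :=
  symmetric e /\ irreflexive e.

Definition connected_graph (T : finType) (e : rel T) : Prop :=
  forall x y : T, connect e x y.

Fixpoint ball (T : finType) (e : rel T) (x : T) (n : nat) : {set T} :=
  match n with
  | 0 => [set x]
  | n'.+1 => ball e x n' :|: [set y | [exists z in ball e x n', e z y]]
  end.

(* Shortest-path distance d_G(x,y): the least n such that y is reachable
   from x within n steps (searched in 0 .. #|T|-1, which suffices for
   connected graphs). *)
Definition dist (T : finType) (e : rel T) (x y : T) : nat :=
  find (fun n => y \in ball e x n) (iota 0 #|T|).

Definition between (T : finType) (e : rel T) (a b c : T) : bool :=
  dist e a b + dist e b c == dist e a c.

Definition collinear (T : finType) (e : rel T) (a b c : T) : bool :=
  [|| between e a b c, between e b a c | between e a c b].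

Definition line (T : finType) (e : rel T) (a b : T) : {set T} :=
  [set c | [|| c == a, c == b | collinear e a b c]].

Definition lines (T : finType) (e : rel T) : {set {set T}} :=
  [set line e ab.1 ab.2 | ab in [set ab : T * T | ab.1 != ab.2]].

Definition universal_line (T : finType) (e : rel T) (L : {set T}) : bool :=
  L == [set: T].

Definition dBE_property (T : finType) (e : rel T) : Prop :=
  (exists a b : T, a != b /\ universal_line e (line e a b)) \/ #|T| <= #|lines e|.

Definition stable (T : finType) (e : rel T) (S : {set T}) : bool :=
  [forall x in S, forall y in S, ~~ e x y].

(* Main.v *)
Require Import Defs.
From mathcomp Require Import all_boot.
Set Implicit Arguments. Unset Strict Implicit. Unset Printing Implicit Defensive.

Record setup (T : finType) (e : rel T) (X Y Z : {set T}) : Prop := Setup {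
  s_sym : symmetric e;
  s_irr : irreflexive e;
  s_Y0 : Y != set0;
  s_Z0 : Z != set0;
  s_XY : [disjoint X & Y];
  s_YZ : [disjoint Y & Z];
  s_XZ : [disjoint X & Z];
  s_cov : X :|: Y :|: Z = [set: T];
  s_stX : stable e X;
  s_stY : stable e Y;
  s_stZ : stable e Z;
  s_YZe : forall y z, y \in Y -> z \in Z -> e y z;
  s_Xn : forall x, x \in X -> (exists2 y, y \in Y & e x y) /\ (exists2 z, z \in Z & e x z)
}.

Definition close (T : finType) (e : rel T) (u v : T) := [exists w, e u w && e w v].
Definition dd (T : finType) (e : rel T) (u v : T) : nat :=
  if u == v then 0 else if e u v then 1 else if close e u v then 2 else 3.

Section Basics.
Variables (T : finType) (e : rel T).

Lemma mem_ball0 u v : (v \in ball e u 0) = (v == u).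
Proof. by rewrite /= inE. Qed.

Lemma mem_ballS u n v :
  (v \in ball e u n.+1) = (v \in ball e u n) || [exists z in ball e u n, e z v].
Proof. by rewrite /= !inE. Qed.

Lemma ball_mono u m n : m <= n -> {subset ball e u m <= ball e u n}.
Proof.
elim: n => [|n IH]; first by rewrite leqn0 => /eqP -> .
rewrite leq_eqVlt => /orP [/eqP -> //|]; rewrite ltnS => /IH H v /H Hv.
by rewrite mem_ballS Hv.
Qed.

Lemma dist_eq u v k : k < #|T| -> v \in ball e u k ->
  (forall j, j < k -> v \notin ball e u j) -> dist e u v = k.
Proof.
move=> Hk Hin Hnot; rewrite /dist.
set P := (fun n => v \in ball e u n).
have Hs : size (iota 0 #|T|) = #|T| by rewrite size_iota.
case: (ltngtP (find P (iota 0 #|T|)) k) => // H.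
- have Hf : find P (iota 0 #|T|) < size (iota 0 #|T|) by rewrite Hs (ltn_trans H).
  have Hh : has P (iota 0 #|T|) by rewrite has_find.
  have := (@nth_find _ 0 P (iota 0 #|T|) Hh).
  have Hf' : find P (iota 0 #|T|) < #|T| by move: Hf; rewrite Hs.
  rewrite (nth_iota 0 0 Hf') add0n.
  by move=> HP; move: (Hnot _ H); rewrite /P in HP; rewrite HP.
- have := (@before_find _ 0 P (iota 0 #|T|) k H).
  by rewrite (nth_iota 0 0 Hk) add0n /P Hin.
Qed.
End Basics.

Section Setup.
Variables (T : finType) (e : rel T) (X Y Z : {set T}).
Hypothesis S : setup e X Y Z.

Lemma esym u v : e u v = e v u.
Proof. exact: (s_sym S). Qed.
Lemma eirr u : e u u = false.
Proof. exact: (s_irr S). Qed.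

Lemma partP w : [\/ w \in X, w \in Y | w \in Z].
Proof.
have : w \in [set: T] by rewrite inE.
by rewrite -(s_cov S) !inE => /orP [/orP [] |] H; [constructor 1|constructor 2|constructor 3].
Qed.

Lemma XnY w : w \in X -> (w \in Y) = false. Proof. exact: disjointFr (s_XY S). Qed.
Lemma XnZ w : w \in X -> (w \in Z) = false. Proof. exact: disjointFr (s_XZ S). Qed.
Lemma YnX w : w \in Y -> (w \in X) = false. Proof. exact: disjointFl (s_XY S). Qed.
Lemma YnZ w : w \in Y -> (w \in Z) = false. Proof. exact: disjointFr (s_YZ S). Qed.
Lemma ZnX w : w \in Z -> (w \in X) = false. Proof. exact: disjointFl (s_XZ S). Qed.
Lemma ZnY w : w \in Z -> (w \in Y) = false. Proof. exact: disjointFl (s_YZ S). Qed.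

Lemma stable_e (P : {set T}) u v : stable e P -> u \in P -> v \in P -> e u v = false.
Proof. by move=> /forallP /(_ u) /implyP H Hu Hv; move: (H Hu) => /forallP /(_ v) /implyP /(_ Hv) /negbTE. Qed.

Lemma eXX u v : u \in X -> v \in X -> e u v = false. Proof. exact: stable_e (s_stX S). Qed.
Lemma eYY u v : u \in Y -> v \in Y -> e u v = false. Proof. exact: stable_e (s_stY S). Qed.
Lemma eZZ u v : u \in Z -> v \in Z -> e u v = false. Proof. exact: stable_e (s_stZ S). Qed.
Lemma eYZ u v : u \in Y -> v \in Z -> e u v. Proof. exact: (s_YZe S). Qed.
Lemma eZY u v : u \in Z -> v \in Y -> e u v. Proof. by move=> Hu Hv; rewrite esym eYZ. Qed.

Lemma neq_parts u v (P Q : {set T}) : u \in P -> v \in Q -> (v \in P) = false -> (u == v) = false.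
Proof. by move=> Hu Hv HP; apply/negbTE; apply: contraFneq HP => <-. Qed.

Lemma someY : exists y, y \in Y.
Proof. by case/set0Pn: (s_Y0 S) => y Hy; exists y. Qed.
Lemma someZ : exists z, z \in Z.
Proof. by case/set0Pn: (s_Z0 S) => z Hz; exists z. Qed.

Lemma closeP u v : reflect (exists w, e u w && e w v) (close e u v).
Proof. exact: existsP. Qed.

Lemma close_sym u v : close e u v = close e v u.
Proof.
by apply/closeP/closeP => [][w /andP [H1 H2]]; exists w; rewrite andbC esym H1 esym H2.
Qed.

Lemma close_YY y y' : y \in Y -> y' \in Y -> close e y y'.
Proof. by move=> Hy Hy'; case: someZ => z Hz; apply/closeP; exists z; rewrite eYZ // eZY. Qed.
Lemma close_ZZ z z' : z \in Z -> z' \in Z -> close e z z'.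
Proof. by move=> Hz Hz'; case: someY => y Hy; apply/closeP; exists y; rewrite eZY // eYZ. Qed.
Lemma close_XY x y : x \in X -> y \in Y -> close e x y.
Proof.
move=> Hx Hy; case: (s_Xn S Hx) => _ [z Hz Hxz]; apply/closeP; exists z.
by rewrite Hxz eZY.
Qed.
Lemma close_XZ x z : x \in X -> z \in Z -> close e x z.
Proof.
move=> Hx Hz; case: (s_Xn S Hx) => [[y Hy Hxy]] _; apply/closeP; exists y.
by rewrite Hxy eYZ.
Qed.

Lemma card_ge (s : seq T) : uniq s -> size s <= #|T|.
Proof. by move=> Hu; apply/card_geqP; exists s; split. Qed.

Lemma uniq3 (a b c : T) : a != b -> a != c -> b != c -> uniq [:: a; b; c].
Proof. by move=> H1 H2 H3; rewrite /= !inE !negb_or H1 H2 H3. Qed.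
Lemma uniq4 (a b c d : T) : a != b -> a != c -> a != d -> b != c -> b != d -> c != d ->
  uniq [:: a; b; c; d].
Proof. by move=> H1 H2 H3 H4 H5 H6; rewrite /= !inE !negb_or H1 H2 H3 H4 H5 H6. Qed.
Lemma neq_e u v : e u v -> u != v.
Proof. by apply: contraTneq => ->; rewrite eirr. Qed.

Lemma distE u v : dist e u v = dd e u v.
Proof.
rewrite /dd; case: eqP => [->|/eqP Huv].
  apply: dist_eq => //; first by rewrite (card_ge (s:=[:: v])).
  by rewrite mem_ball0.
case: ifP => Huv1.
  apply: dist_eq => //.
  - by apply: (leq_trans _ (card_ge (s:=[:: u; v]) _)) => //=; rewrite inE andbT.
  - by rewrite mem_ballS; apply/orP; right; apply/existsP; exists u; rewrite mem_ball0 eqxx.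
  - by move=> [|j] // _; rewrite mem_ball0 eq_sym.
have Hb1 : (v \in ball e u 1) = false.
  apply/negP; rewrite mem_ballS mem_ball0 => /orP [/eqP Evu|/existsP [z /andP [Hz Hzv]]].
  - by move: Huv; rewrite Evu eqxx.
  - by move: Hz Hzv; rewrite mem_ball0 => /eqP ->; rewrite Huv1.
case: ifP => Hc.
  case/closeP: Hc => w /andP [H1 H2].
  apply: dist_eq.
  - apply: (leq_trans _ (card_ge (s:=[:: u; w; v]) _)) => //.
    by apply: uniq3 => //; apply: neq_e.
  - rewrite mem_ballS; apply/orP; right; apply/existsP; exists w.
    by rewrite H2 andbT mem_ballS mem_ball0; apply/orP; right; apply/existsP; exists u; rewrite mem_ball0 eqxx.
  - move=> [|[|j]] // _; last by rewrite Hb1.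
    by rewrite mem_ball0; apply/negP => /eqP E; move: Huv; rewrite E eqxx.
have HuX : u \in X.
  case: (partP u) => // Hu.
  - case: (partP v) => Hv.
    + by move: Huv1; rewrite esym; move: Hc; rewrite close_sym close_XY.
    + by move: Hc; rewrite close_YY.
    + by move: Huv1; rewrite eYZ.
  - case: (partP v) => Hv.
    + by move: Hc; rewrite close_sym close_XZ.
    + by move: Huv1; rewrite eZY.
    + by move: Hc; rewrite close_ZZ.
have HvX : v \in X.
  case: (partP v) => // Hv.
  - by move: Hc; rewrite close_XY.
  - by move: Hc; rewrite close_XZ.
case: (s_Xn S HuX) => [[y Hy Huy]] _.
case: (s_Xn S HvX) => _ [z Hz Hvz].
have Hyz : e y z by rewrite eYZ.
apply: dist_eq.
- apply: (leq_trans _ (card_ge (s:=[:: u; y; z; v]) _)) => //.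
  apply: uniq4 => //; try exact: neq_e.
  + by rewrite (neq_parts HuX Hz (ZnX Hz)).
  + by rewrite (neq_parts Hy HvX (XnY HvX)).
  + by rewrite eq_sym; apply: neq_e.
- rewrite mem_ballS; apply/orP; right; apply/existsP; exists z.
  rewrite esym Hvz andbT mem_ballS; apply/orP; right; apply/existsP; exists y.
  by rewrite Hyz andbT mem_ballS mem_ball0; apply/orP; right; apply/existsP; exists u; rewrite mem_ball0 eqxx.
- move=> [|[|[|j]]] // _.
  + by rewrite mem_ball0; apply/negP => /eqP E; move: Huv; rewrite E eqxx.
  + by rewrite Hb1.
  + rewrite mem_ballS Hb1 orFb; apply/existsP => [][w /andP [Hw Hwv]].
    move: Hw; rewrite mem_ballS mem_ball0 => /orP [/eqP Ew|].
      by move: Hwv; rewrite Ew Huv1.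
    case/existsP => w' /andP []; rewrite mem_ball0 => /eqP -> Huw.
    by move: Hc; rewrite /close; case/existsP; exists w; rewrite Huw Hwv.
Qed.

End Setup.

Ltac close_cases e :=
  repeat match goal with |- context [close e ?a ?b] => case: (close e a b) end.
Ltac e_cases e :=
  repeat match goal with |- context [e ?a ?b] => case: (e a b) end.
Ltac neq_rw :=
  repeat match goal with
  | H : is_true (?a != ?b) |- context [?a == ?b] => rewrite (negbTE H)
  | H : is_true (?a != ?b) |- context [?b == ?a] => rewrite (eq_sym b a) (negbTE H)
  end.

Section Lines.
Variables (T : finType) (e : rel T) (X Y Z : {set T}).
Hypothesis S : setup e X Y Z.

Lemma mem_lineE a b c : c \in line e a b =
  [|| c == a, c == b, dd e a b + dd e b c == dd e a c,
      dd e b a + dd e a c == dd e b c | dd e a c + dd e c b == dd e a b].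
Proof. by rewrite /line inE /collinear /between !(distE S). Qed.

Lemma close_e u v w : e u w -> e w v -> close e u v.
Proof. by move=> H1 H2; apply/existsP; exists w; rewrite H1 H2. Qed.

Lemma ddXX u v : u \in X -> v \in X -> dd e u v = if u == v then 0 else if close e u v then 2 else 3.
Proof. by move=> Hu Hv; rewrite /dd (eXX S). Qed.
Lemma ddYY u v : u \in Y -> v \in Y -> dd e u v = if u == v then 0 else 2.
Proof. by move=> Hu Hv; rewrite /dd (eYY S) // (close_YY S). Qed.
Lemma ddZZ u v : u \in Z -> v \in Z -> dd e u v = if u == v then 0 else 2.
Proof. by move=> Hu Hv; rewrite /dd (eZZ S) // (close_ZZ S). Qed.
Lemma ddYZ u v : u \in Y -> v \in Z -> dd e u v = 1.
Proof. by move=> Hu Hv; rewrite /dd (neq_parts Hu Hv (ZnY S Hv)) (eYZ S). Qed.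
Lemma ddZY u v : u \in Z -> v \in Y -> dd e u v = 1.
Proof. by move=> Hu Hv; rewrite /dd (neq_parts Hu Hv (YnZ S Hv)) (eZY S). Qed.
Lemma ddXY u v : u \in X -> v \in Y -> dd e u v = if e u v then 1 else 2.
Proof. by move=> Hu Hv; rewrite /dd (neq_parts Hu Hv (YnX S Hv)) (close_XY S). Qed.
Lemma ddYX u v : u \in Y -> v \in X -> dd e u v = if e v u then 1 else 2.
Proof. by move=> Hu Hv; rewrite /dd (neq_parts Hu Hv (XnY S Hv)) (close_sym S) (close_XY S) // (esym S). Qed.
Lemma ddXZ u v : u \in X -> v \in Z -> dd e u v = if e u v then 1 else 2.
Proof. by move=> Hu Hv; rewrite /dd (neq_parts Hu Hv (ZnX S Hv)) (close_XZ S). Qed.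
Lemma ddZX u v : u \in Z -> v \in X -> dd e u v = if e v u then 1 else 2.
Proof. by move=> Hu Hv; rewrite /dd (neq_parts Hu Hv (XnZ S Hv)) (close_sym S) (close_XZ S) // (esym S). Qed.

Lemma F_XX_X x x' w : x \in X -> x' \in X -> w \in X -> x != x' ->
  (w \in line e x x') = (w == x) || (w == x').
Proof.
move=> Hx Hx' Hw Hxx'; rewrite mem_lineE.
case: (eqVneq w x) => [->|Hwx] //=; case: (eqVneq w x') => [->|Hwx'] //=; rewrite ?orbT //.
rewrite !ddXX //; neq_rw.
by close_cases e.
Qed.

Lemma F_XX_YZ x x' w : x \in X -> x' \in X -> w \notin X -> x != x' ->
  (w \in line e x x') = if close e x x' then e x w && e x' w else e x w || e x' w.
Proof.
move=> Hx Hx' Hw Hxx'.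
have Hwx : w != x by apply: contraNneq Hw => ->.
have Hwx' : w != x' by apply: contraNneq Hw => ->.
rewrite mem_lineE ?(ddXX Hx Hx'); neq_rw.
rewrite ?(ddXX Hx' Hx); neq_rw.
have Hcs : close e x' x = close e x x' by rewrite (close_sym S).
rewrite Hcs /=.
case: (partP S w) => Hw'; first by rewrite Hw' in Hw.
- rewrite ?(ddXY Hx' Hw') ?(ddXY Hx Hw') ?(ddYX Hw' Hx') ?(ddYX Hw' Hx).
  case Ec: (close e x x'); case E1: (e x w); case E2: (e x' w) => //.
  by move: Ec; rewrite (close_e E1 (_ : e w x' = true)) // (esym S).
- rewrite ?(ddXZ Hx' Hw') ?(ddXZ Hx Hw') ?(ddZX Hw' Hx') ?(ddZX Hw' Hx).
  case Ec: (close e x x'); case E1: (e x w); case E2: (e x' w) => //.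
  by move: Ec; rewrite (close_e E1 (_ : e w x' = true)) // (esym S).
Qed.

Lemma F_YY_Y y y' w : y \in Y -> y' \in Y -> w \in Y -> y != y' ->
  (w \in line e y y') = (w == y) || (w == y').
Proof.
move=> Hy Hy' Hw Hyy'; rewrite mem_lineE.
case: (eqVneq w y) => [->|Hwy] //=; case: (eqVneq w y') => [->|Hwy'] //=; rewrite ?orbT //.
by rewrite !ddYY //; neq_rw.
Qed.

Lemma F_YY_Z y y' w : y \in Y -> y' \in Y -> w \in Z -> y != y' -> w \in line e y y'.
Proof.
move=> Hy Hy' Hw Hyy'; rewrite mem_lineE.
by rewrite ?(ddYY Hy Hy') ?(ddYZ Hy' Hw) ?(ddYZ Hy Hw) ?(ddZY Hw Hy'); neq_rw; rewrite !orbT.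
Qed.

Lemma F_YY_X y y' w : y \in Y -> y' \in Y -> w \in X -> y != y' ->
  (w \in line e y y') = e w y && e w y'.
Proof.
move=> Hy Hy' Hw Hyy'.
rewrite mem_lineE (neq_parts Hw Hy (YnX S Hy)) (neq_parts Hw Hy' (YnX S Hy')) /=.
rewrite ?(ddYY Hy Hy') ?(ddYY Hy' Hy) ?(ddYX Hy' Hw) ?(ddYX Hy Hw) ?(ddXY Hw Hy'); neq_rw.
by e_cases e.
Qed.

Lemma F_YZ_X y z w : y \in Y -> z \in Z -> w \in X ->
  (w \in line e y z) = (e w y != e w z).
Proof.
move=> Hy Hz Hw.
rewrite mem_lineE (neq_parts Hw Hy (YnX S Hy)) (neq_parts Hw Hz (ZnX S Hz)) /=.
rewrite ?(ddYZ Hy Hz) ?(ddZY Hz Hy) ?(ddZX Hz Hw) ?(ddYX Hy Hw) ?(ddXZ Hw Hz).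
by e_cases e.
Qed.

Lemma F_YZ_YZ y z w : y \in Y -> z \in Z -> w \notin X -> w \in line e y z.
Proof.
move=> Hy Hz Hw; rewrite mem_lineE.
case: (eqVneq w y) => [->|Hwy] //=; case: (eqVneq w z) => [->|Hwz] //=; rewrite ?orbT //.
rewrite ?(ddYZ Hy Hz) ?(ddZY Hz Hy).
case: (partP S w) => Hw'; first by rewrite Hw' in Hw.
- by rewrite ?(ddYY Hy Hw') ?(ddZY Hz Hw'); neq_rw.
- by rewrite ?(ddYZ Hy Hw') ?(ddZZ Hz Hw'); neq_rw; rewrite !orbT.
Qed.

End Lines.

Lemma setup_swap (T : finType) (e : rel T) X Y Z : setup e X Y Z -> setup e X Z Y.
Proof.
case=> Hs Hi HY HZ HXY HYZ HXZ Hc HsX HsY HsZ HYZe HXn; split => //.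
- by rewrite disjoint_sym.
- by rewrite -setUA (setUC Z) setUA.
- by move=> y z Hy Hz; rewrite Hs HYZe.
- by move=> x Hx; case: (HXn x Hx) => H1 H2; split.
Qed.

Section LinesXY.
Variables (T : finType) (e : rel T) (X Y Z : {set T}).
Hypothesis S : setup e X Y Z.

Lemma F_XYa_Y x y w : x \in X -> y \in Y -> w \in Y -> e x y ->
  (w \in line e x y) = e x w.
Proof.
move=> Hx Hy Hw Hxy; rewrite (mem_lineE S).
case: (eqVneq w y) => [->|Hwy]; first by rewrite /= orbT Hxy.
rewrite (neq_parts Hw Hx (XnY S Hx)) /= ?(ddXY S Hx Hy) ?(ddYY S Hy Hw) ?(ddXY S Hx Hw) ?(ddYX S Hy Hx) ?(ddYY S Hw Hy) Hxy; neq_rw.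
by e_cases e.
Qed.

Lemma F_XYa_Z x y w : x \in X -> y \in Y -> w \in Z -> e x y ->
  (w \in line e x y) = ~~ e x w.
Proof.
move=> Hx Hy Hw Hxy; rewrite (mem_lineE S).
rewrite (neq_parts Hw Hx (XnZ S Hx)) (neq_parts Hw Hy (YnZ S Hy)) /=.
rewrite ?(ddXY S Hx Hy) ?(ddYZ S Hy Hw) ?(ddXZ S Hx Hw) ?(ddYX S Hy Hx) ?(ddZY S Hw Hy) Hxy.
by e_cases e.
Qed.

Lemma F_XYa_X x y w : x \in X -> y \in Y -> w \in X -> e x y ->
  (w \in line e x y) = (w == x) || e w y || ~~ close e x w.
Proof.
move=> Hx Hy Hw Hxy; rewrite (mem_lineE S).
case: (eqVneq w x) => [->|Hwx] //=.
rewrite (neq_parts Hw Hy (YnX S Hy)) /=.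
rewrite ?(ddXY S Hx Hy) ?(ddYX S Hy Hw) ?(ddXX S Hx Hw) ?(ddYX S Hy Hx) ?(ddXY S Hw Hy) Hxy; neq_rw.
case Ewy: (e w y); case Ec: (close e x w) => //.
by move: Ec; rewrite (close_e Hxy (_ : e y w = true)) // (esym S).
Qed.

Lemma F_XYn_Y x y w : x \in X -> y \in Y -> w \in Y -> ~~ e x y ->
  (w \in line e x y) = (w == y).
Proof.
move=> Hx Hy Hw /negbTE Hxy; rewrite (mem_lineE S).
case: (eqVneq w y) => [->|Hwy]; first by rewrite /= orbT.
rewrite (neq_parts Hw Hx (XnY S Hx)) /= ?(ddXY S Hx Hy) ?(ddYY S Hy Hw) ?(ddXY S Hx Hw) ?(ddYX S Hy Hx) ?(ddYY S Hw Hy) Hxy; neq_rw.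
by e_cases e.
Qed.

Lemma F_XYn_Z x y w : x \in X -> y \in Y -> w \in Z -> ~~ e x y ->
  (w \in line e x y) = e x w.
Proof.
move=> Hx Hy Hw /negbTE Hxy; rewrite (mem_lineE S).
rewrite (neq_parts Hw Hx (XnZ S Hx)) (neq_parts Hw Hy (YnZ S Hy)) /=.
rewrite ?(ddXY S Hx Hy) ?(ddYZ S Hy Hw) ?(ddXZ S Hx Hw) ?(ddYX S Hy Hx) ?(ddZY S Hw Hy) Hxy.
by e_cases e.
Qed.

Lemma F_XYn_X x y w : x \in X -> y \in Y -> w \in X -> ~~ e x y ->
  (w \in line e x y) = (w == x) || (e w y && ~~ close e x w).
Proof.
move=> Hx Hy Hw /negbTE Hxy; rewrite (mem_lineE S).
case: (eqVneq w x) => [->|Hwx] //=.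
rewrite (neq_parts Hw Hy (YnX S Hy)) /=.
rewrite ?(ddXY S Hx Hy) ?(ddYX S Hy Hw) ?(ddXX S Hx Hw) ?(ddYX S Hy Hx) ?(ddXY S Hw Hy) Hxy; neq_rw.
by case Ewy: (e w y); case Ec: (close e x w).
Qed.

End LinesXY.

Section Dist.
Variables (T : finType) (e : rel T) (X Y Z : {set T}).
Hypothesis S : setup e X Y Z.
Hypothesis NU : forall a b : T, a != b -> line e a b != [set: T].

Lemma neq_by (A B : {set T}) w : (w \in A) != (w \in B) -> A != B.
Proof. by apply: contraNneq => ->. Qed.

Lemma dd_sym u v : dd e u v = dd e v u.
Proof. by rewrite /dd eq_sym (esym S) (close_sym S). Qed.

Lemma line_sym a b : line e a b = line e b a.
Proof.
apply/setP => c; rewrite !(mem_lineE S) (dd_sym b a) (dd_sym c b) (dd_sym c a).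
rewrite (addnC (dd e a c) (dd e b c)).
by case: (c == a); case: (c == b); case: (_ + _ == dd e a c); case: (_ + _ == dd e b c);
  case: (_ + _ == dd e a b).
Qed.

Lemma nuniv a b : a != b -> (forall w, w \in line e a b) -> False.
Proof. by move=> Hab H; move/eqP: (NU Hab); apply; apply/setP => w; rewrite H inE. Qed.

Lemma d12 x0 x y1 y : x0 \in X -> x \in X -> y1 \in Y -> y \in Y -> x0 != x -> y1 != y ->
  [\/ ~~ e x0 y1, exists2 z, z \in Z & ~~ e x0 z | forall u w, u \in X -> w \notin X -> e u w] ->
  line e x0 x != line e y1 y.
Proof.
move=> Hx0 Hx Hy1 Hy Hxx Hyy Hc.
have Ex0 : x0 \in line e x0 x by rewrite (F_XX_X S Hx0 Hx Hx0 Hxx) eqxx.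
have Ex : x \in line e x0 x by rewrite (F_XX_X S Hx0 Hx Hx Hxx) eqxx orbT.
case Ecl: (close e x0 x).
- case: Hc => [Hn|[z Hz Hnz]|Hfull].
  + by apply: (neq_by (w := x0)); rewrite Ex0 (F_YY_X S Hy1 Hy Hx0 Hyy) (negbTE Hn).
  + apply: (neq_by (w := z)); rewrite (F_YY_Z S Hy1 Hy Hz Hyy) (F_XX_YZ S Hx0 Hx _ Hxx) ?(ZnX S Hz) //.
    by rewrite Ecl (negbTE Hnz).
  + case: (pickP (fun u => (u \in X) && (u != x0) && (u != x))) => [u /andP [/andP [Hu Hu0] Hux]|Hno].
    * apply: (neq_by (w := u)); rewrite (F_XX_X S Hx0 Hx Hu Hxx) (F_YY_X S Hy1 Hy Hu Hyy).
      by rewrite (negbTE Hu0) (negbTE Hux) !Hfull // ?(YnX S).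
    * exfalso; apply: (nuniv Hxx) => w.
      case: (boolP (w \in X)) => Hw.
      - rewrite (F_XX_X S Hx0 Hx Hw Hxx); move: (Hno w); rewrite Hw /=.
        by case: (w == x0); case: (w == x).
      - by rewrite (F_XX_YZ S Hx0 Hx Hw Hxx) Ecl !Hfull.
- case E0: (e x0 y1 && e x0 y).
  + apply: (neq_by (w := x)); rewrite Ex (F_YY_X S Hy1 Hy Hx Hyy).
    apply/negP => /andP [H1 _]; case/andP: E0 => H0 _.
    by move: Ecl; rewrite (close_e H0 (_ : e y1 x = true)) // (esym S).
  + by apply: (neq_by (w := x0)); rewrite Ex0 (F_YY_X S Hy1 Hy Hx0 Hyy) E0.
Qed.


Lemma d11 x0 x x' : x0 \in X -> x \in X -> x' \in X -> x0 != x -> x0 != x' -> x != x' ->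
  line e x0 x != line e x0 x'.
Proof.
move=> H0 H H' H1 H2 H3; apply: (neq_by (w := x)).
by rewrite (F_XX_X S H0 H H H1) (F_XX_X S H0 H' H H2) eqxx orbT (eq_sym x x0) (negbTE H1) (negbTE H3).
Qed.

Lemma d22 y1 y y' : y1 \in Y -> y \in Y -> y' \in Y -> y1 != y -> y1 != y' -> y != y' ->
  line e y1 y != line e y1 y'.
Proof.
move=> H0 H H' H1 H2 H3; apply: (neq_by (w := y)).
by rewrite (F_YY_Y S H0 H H H1) (F_YY_Y S H0 H' H H2) eqxx orbT (eq_sym y y1) (negbTE H1) (negbTE H3).
Qed.

Lemma d23 y1 y z1 z : y1 \in Y -> y \in Y -> z1 \in Z -> z \in Z -> y1 != y -> z1 != z ->
  (exists y'', [/\ y'' \in Y, y'' != y1 & y'' != y]) -> line e y1 y != line e z1 z.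
Proof.
move=> Hy1 Hy Hz1 Hz H1 H2 [y'' [H'' Ha Hb]]; apply: (neq_by (w := y'')).
by rewrite (F_YY_Y S Hy1 Hy H'' H1) (F_YY_Z (setup_swap S) Hz1 Hz H'' H2) (negbTE Ha) (negbTE Hb).
Qed.

Lemma d46 x0 y0 z0 : x0 \in X -> y0 \in Y -> z0 \in Z -> e x0 y0 -> e x0 z0 ->
  line e x0 y0 != line e y0 z0.
Proof.
move=> Hx Hy Hz H1 H2; apply: (neq_by (w := z0)).
by rewrite (F_XYa_Z S Hx Hy Hz H1) (F_YZ_YZ S Hy Hz) ?H2 // (ZnX S Hz).
Qed.

Lemma d45 x0 y0 z0 : x0 \in X -> y0 \in Y -> z0 \in Z -> e x0 y0 -> e x0 z0 ->
  line e x0 y0 != line e x0 z0.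
Proof.
move=> Hx Hy Hz H1 H2; apply: (neq_by (w := y0)).
by rewrite (F_XYa_Y S Hx Hy Hy H1) (F_XYa_Z (setup_swap S) Hx Hz Hy H2) H1.
Qed.

Lemma d42 x0 y0 y1 y : x0 \in X -> y0 \in Y -> y1 \in Y -> y \in Y -> e x0 y0 -> y1 != y ->
  line e x0 y0 != line e y1 y.
Proof.
move=> Hx Hy0 Hy1 Hy H1 H2.
have [z0 Hz0 Hxz] := (s_Xn S Hx).2.
apply: (neq_by (w := z0)).
by rewrite (F_XYa_Z S Hx Hy0 Hz0 H1) (F_YY_Z S Hy1 Hy Hz0 H2) Hxz.
Qed.

Lemma d43 x0 y0 z1 z : x0 \in X -> y0 \in Y -> z1 \in Z -> z \in Z -> e x0 y0 -> z1 != z ->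
  line e x0 y0 != line e z1 z.
Proof.
move=> Hx Hy0 Hz1 Hz H1 H2.
case E: (e x0 z1 && e x0 z).
- apply: (neq_by (w := z1)).
  rewrite (F_XYa_Z S Hx Hy0 Hz1 H1) (F_YY_Y (setup_swap S) Hz1 Hz Hz1 H2) eqxx.
  by case/andP: E => ->.
- apply: (neq_by (w := x0)).
  by rewrite (F_XYa_X S Hx Hy0 Hx H1) eqxx (F_YY_X (setup_swap S) Hz1 Hz Hx H2) E.
Qed.

Lemma d14 x0 x y0 : x0 \in X -> x \in X -> y0 \in Y -> x0 != x -> e x0 y0 ->
  line e x0 x != line e x0 y0.
Proof.
move=> Hx0 Hx Hy0 Hxx H1.
case Ecl: (close e x0 x).
- have [z Hz Hxz] := (s_Xn S Hx).2.
  apply: (neq_by (w := z)).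
  rewrite (F_XX_YZ S Hx0 Hx _ Hxx) ?(ZnX S Hz) // (F_XYa_Z S Hx0 Hy0 Hz H1) Ecl Hxz andbT.
  by case: (e x0 z).
- have [z0 Hz0 Hxz] := (s_Xn S Hx0).2.
  apply: (neq_by (w := z0)).
  by rewrite (F_XX_YZ S Hx0 Hx _ Hxx) ?(ZnX S Hz0) // (F_XYa_Z S Hx0 Hy0 Hz0 H1) Ecl Hxz.
Qed.

Lemma d16 x0 x y0 z0 : x0 \in X -> x \in X -> y0 \in Y -> z0 \in Z -> x0 != x ->
  e x0 y0 -> e x0 z0 -> line e x0 x != line e y0 z0.
Proof.
move=> Hx0 Hx Hy0 Hz0 Hxx H1 H2; apply: (neq_by (w := x0)).
by rewrite (F_XX_X S Hx0 Hx Hx0 Hxx) eqxx (F_YZ_X S Hy0 Hz0 Hx0) H1 H2.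
Qed.

Lemma d26 x0 y0 z0 y1 y : x0 \in X -> y0 \in Y -> z0 \in Z -> y1 \in Y -> y \in Y ->
  e x0 y0 -> e x0 z0 -> y1 != y -> line e y1 y != line e y0 z0.
Proof.
move=> Hx0 Hy0 Hz0 Hy1 Hy H1 H2 Hyy.
case: (pickP (fun u => (u \in Y) && (u != y1) && (u != y))) => [u /andP [/andP [Hu Hu1] Huy]|Hno].
  apply: (neq_by (w := u)).
  by rewrite (F_YY_Y S Hy1 Hy Hu Hyy) (F_YZ_YZ S Hy0 Hz0) ?(YnX S Hu) // (negbTE Hu1) (negbTE Huy).
have HY : forall v, v \in Y -> (v == y1) || (v == y).
  by move=> v Hv; move: (Hno v); rewrite Hv /=; case: (v == y1); case: (v == y).
case E0: (e x0 y1 && e x0 y).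
  apply: (neq_by (w := x0)).
  by rewrite (F_YY_X S Hy1 Hy Hx0 Hyy) E0 (F_YZ_X S Hy0 Hz0 Hx0) H1 H2.
(* y' := the one among y1, y not adjacent to x0 *)
have [y' [Hy' Hny' Hpair HY2]] : exists y', [/\ y' \in Y, ~~ e x0 y',
    forall w, e w y1 && e w y = e w y0 && e w y' &
    forall v, v \in Y -> (v == y0) || (v == y')].
  case/orP: (HY y0 Hy0) => /eqP Ey0.
  - exists y; split => //; first by move: E0; rewrite -Ey0 H1 /= => ->.
      by move=> w; rewrite Ey0.
    by move=> v Hv; rewrite Ey0; apply: HY.
  - exists y1; split => //; first by move: E0; rewrite -Ey0 H1 andbT => ->.
      by move=> w; rewrite Ey0 andbC.
    by move=> v Hv; rewrite Ey0 orbC; apply: HY.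
have HY' : forall w, w \in X -> e w y0 || e w y'.
  move=> w Hw; have [v Hv Hwv] := (s_Xn S Hw).1.
  by case/orP: (HY2 v Hv) => /eqP Ev; rewrite -Ev Hwv ?orbT.
apply/negP => /eqP E.
apply: (nuniv (a := y') (b := z0)); first by rewrite (neq_parts Hy' Hz0 (ZnY S Hz0)).
move=> w; case: (boolP (w \in X)) => Hw; last by rewrite (F_YZ_YZ S Hy' Hz0).
move/setP: E => /(_ w).
rewrite (F_YY_X S Hy1 Hy Hw Hyy) (F_YZ_X S Hy0 Hz0 Hw) (F_YZ_X S Hy' Hz0 Hw) Hpair.
move: (HY' w Hw).
by case: (e w y0); case: (e w y'); case: (e w z0).
Qed.

End Dist.

Lemma count_inj (T : finType) (e : rel T) (f : T -> {set T}) :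
  injective f -> (forall v, f v \in lines e) -> #|T| <= #|lines e|.
Proof.
move=> Hf Hl; rewrite -(card_imset (mem T) Hf); apply: subset_leq_card.
by apply/subsetP => L /imsetP [v _ ->].
Qed.

Lemma line_in_lines (T : finType) (e : rel T) a b : a != b -> line e a b \in lines e.
Proof. by move=> Hab; apply/imsetP; exists (a, b) => //; rewrite inE. Qed.

Section Star.
Variables (T : finType) (e : rel T) (X Y Z : {set T}).
Hypothesis S : setup e X Y Z.
Hypothesis NU : forall a b : T, a != b -> line e a b != [set: T].
Let S' := setup_swap S.
Variables (x0 y0 z0 y1 z1 : T).
Hypotheses (Hx0 : x0 \in X) (Hy0 : y0 \in Y) (Hz0 : z0 \in Z) (H1 : e x0 y0) (H2 : e x0 z0)
  (Hy1 : y1 \in Y) (Hz1 : z1 \in Z).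
Hypothesis HC2 : [\/ ~~ e x0 y1, exists2 z, z \in Z & ~~ e x0 z | forall u w, u \in X -> w \notin X -> e u w].
Hypothesis HC3 : [\/ ~~ e x0 z1, exists2 y, y \in Y & ~~ e x0 y | forall u w, u \in X -> w \notin X -> e u w].
Hypothesis H23 : forall y z, y \in Y -> z \in Z -> y1 != y -> z1 != z ->
  (exists y'', [/\ y'' \in Y, y'' != y1 & y'' != y]) \/ (exists z'', [/\ z'' \in Z, z'' != z1 & z'' != z]).

Definition fstar v :=
  if v == x0 then line e y0 z0 else if v \in X then line e x0 v
  else if v == y1 then line e x0 y0 else if v \in Y then line e y1 v
  else if v == z1 then line e x0 z0 else line e z1 v.

Variant fcls (v : T) : {set T} -> Type :=
  | C0 of v = x0 : fcls v (line e y0 z0)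
  | C1 of v \in X & x0 != v : fcls v (line e x0 v)
  | C2 of v = y1 : fcls v (line e x0 y0)
  | C3 of v \in Y & y1 != v : fcls v (line e y1 v)
  | C4 of v = z1 : fcls v (line e x0 z0)
  | C5 of v \in Z & z1 != v : fcls v (line e z1 v).

Lemma fP v : fcls v (fstar v).
Proof.
rewrite /fstar; case: eqP => [->|/eqP H0]; first exact: C0.
case: ifP => HX; first by apply: C1; rewrite // eq_sym.
case: eqP => [->|/eqP H3]; first exact: C2.
case: ifP => HY; first by apply: C3; rewrite // eq_sym.
case: eqP => [->|/eqP H5]; first exact: C4.
apply: C5; last by rewrite eq_sym.
by case: (partP S v) => H; [rewrite H in HX | rewrite H in HY |].
Qed.

Lemma neqXZ u v : u \in X -> v \in Z -> u != v.
Proof. by move=> Hu Hv; rewrite (neq_parts Hu Hv (ZnX S Hv)). Qed.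
Lemma neqXY u v : u \in X -> v \in Y -> u != v.
Proof. by move=> Hu Hv; rewrite (neq_parts Hu Hv (YnX S Hv)). Qed.
Lemma neqYZ u v : u \in Y -> v \in Z -> u != v.
Proof. by move=> Hu Hv; rewrite (neq_parts Hu Hv (ZnY S Hv)). Qed.

Lemma fstar_lines v : fstar v \in lines e.
Proof.
case: (fP v) => [_|_ H|_|_ H|_|_ H]; apply: line_in_lines => //.
- exact: neqYZ.
- exact: neqXY.
- exact: neqXZ.
Qed.

Lemma neqE (A B : {set T}) : A != B -> A = B -> False.
Proof. by move=> /eqP. Qed.

Lemma eq_sym_neq (u v : T) : u != v -> v != u.
Proof. by rewrite eq_sym. Qed.

Lemma fstar_inj : injective fstar.
Proof.
move=> u v; case: (fP u) => [Eu|Hu Nu|Eu|Hu Nu|Eu|Hu Nu];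
  case: (fP v) => [Ev|Hv Nv|Ev|Hv Nv|Ev|Hv Nv] E.
- by rewrite Eu Ev.
- case: (eqVneq u v) => // Nuv; exfalso; apply: (neqE _ E).
  rewrite eq_sym; exact: (d16 S Hx0 Hv Hy0 Hz0 Nv H1 H2).
- case: (eqVneq u v) => // Nuv; exfalso; apply: (neqE _ E).
  rewrite eq_sym; exact: (d46 S Hx0 Hy0 Hz0 H1 H2).
- case: (eqVneq u v) => // Nuv; exfalso; apply: (neqE _ E).
  rewrite eq_sym; exact: (d26 S NU Hx0 Hy0 Hz0 Hy1 Hv H1 H2 Nv).
- case: (eqVneq u v) => // Nuv; exfalso; apply: (neqE _ E).
  rewrite eq_sym; rewrite (line_sym S y0 z0); exact: (d46 S' Hx0 Hz0 Hy0 H2 H1).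
- case: (eqVneq u v) => // Nuv; exfalso; apply: (neqE _ E).
  rewrite eq_sym; rewrite (line_sym S y0 z0); exact: (d26 S' NU Hx0 Hz0 Hy0 Hz1 Hv H2 H1 Nv).
- case: (eqVneq u v) => // Nuv; exfalso; apply: (neqE _ E).
  exact: (d16 S Hx0 Hu Hy0 Hz0 Nu H1 H2).
- case: (eqVneq u v) => // Nuv; exfalso; apply: (neqE _ E).
  exact: (d11 S Hx0 Hu Hv Nu Nv Nuv).
- case: (eqVneq u v) => // Nuv; exfalso; apply: (neqE _ E).
  exact: (d14 S Hx0 Hu Hy0 Nu H1).
- case: (eqVneq u v) => // Nuv; exfalso; apply: (neqE _ E).
  exact: (d12 S NU Hx0 Hu Hy1 Hv Nu Nv HC2).
- case: (eqVneq u v) => // Nuv; exfalso; apply: (neqE _ E).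
  exact: (d14 S' Hx0 Hu Hz0 Nu H2).
- case: (eqVneq u v) => // Nuv; exfalso; apply: (neqE _ E).
  exact: (d12 S' NU Hx0 Hu Hz1 Hv Nu Nv HC3).
- case: (eqVneq u v) => // Nuv; exfalso; apply: (neqE _ E).
  exact: (d46 S Hx0 Hy0 Hz0 H1 H2).
- case: (eqVneq u v) => // Nuv; exfalso; apply: (neqE _ E).
  rewrite eq_sym; exact: (d14 S Hx0 Hv Hy0 Nv H1).
- by rewrite Eu Ev.
- case: (eqVneq u v) => // Nuv; exfalso; apply: (neqE _ E).
  exact: (d42 S Hx0 Hy0 Hy1 Hv H1 Nv).
- case: (eqVneq u v) => // Nuv; exfalso; apply: (neqE _ E).
  exact: (d45 S Hx0 Hy0 Hz0 H1 H2).
- case: (eqVneq u v) => // Nuv; exfalso; apply: (neqE _ E).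
  exact: (d43 S Hx0 Hy0 Hz1 Hv H1 Nv).
- case: (eqVneq u v) => // Nuv; exfalso; apply: (neqE _ E).
  exact: (d26 S NU Hx0 Hy0 Hz0 Hy1 Hu H1 H2 Nu).
- case: (eqVneq u v) => // Nuv; exfalso; apply: (neqE _ E).
  rewrite eq_sym; exact: (d12 S NU Hx0 Hv Hy1 Hu Nv Nu HC2).
- case: (eqVneq u v) => // Nuv; exfalso; apply: (neqE _ E).
  rewrite eq_sym; exact: (d42 S Hx0 Hy0 Hy1 Hu H1 Nu).
- case: (eqVneq u v) => // Nuv; exfalso; apply: (neqE _ E).
  exact: (d22 S Hy1 Hu Hv Nu Nv Nuv).
- case: (eqVneq u v) => // Nuv; exfalso; apply: (neqE _ E).
  rewrite eq_sym; exact: (d43 S' Hx0 Hz0 Hy1 Hu H2 Nu).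
- case: (eqVneq u v) => // Nuv; exfalso; apply: (neqE _ E).
  case: (H23 Hu Hv Nu Nv) => Hex; [exact: (d23 S Hy1 Hu Hz1 Hv Nu Nv Hex) | rewrite eq_sym; exact: (d23 S' Hz1 Hv Hy1 Hu Nv Nu Hex)].
- case: (eqVneq u v) => // Nuv; exfalso; apply: (neqE _ E).
  rewrite (line_sym S y0 z0); exact: (d46 S' Hx0 Hz0 Hy0 H2 H1).
- case: (eqVneq u v) => // Nuv; exfalso; apply: (neqE _ E).
  rewrite eq_sym; exact: (d14 S' Hx0 Hv Hz0 Nv H2).
- case: (eqVneq u v) => // Nuv; exfalso; apply: (neqE _ E).
  rewrite eq_sym; exact: (d45 S Hx0 Hy0 Hz0 H1 H2).
- case: (eqVneq u v) => // Nuv; exfalso; apply: (neqE _ E).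
  exact: (d43 S' Hx0 Hz0 Hy1 Hv H2 Nv).
- by rewrite Eu Ev.
- case: (eqVneq u v) => // Nuv; exfalso; apply: (neqE _ E).
  exact: (d42 S' Hx0 Hz0 Hz1 Hv H2 Nv).
- case: (eqVneq u v) => // Nuv; exfalso; apply: (neqE _ E).
  rewrite (line_sym S y0 z0); exact: (d26 S' NU Hx0 Hz0 Hy0 Hz1 Hu H2 H1 Nu).
- case: (eqVneq u v) => // Nuv; exfalso; apply: (neqE _ E).
  rewrite eq_sym; exact: (d12 S' NU Hx0 Hv Hz1 Hu Nv Nu HC3).
- case: (eqVneq u v) => // Nuv; exfalso; apply: (neqE _ E).
  rewrite eq_sym; exact: (d43 S Hx0 Hy0 Hz1 Hu H1 Nu).
- case: (eqVneq u v) => // Nuv; exfalso; apply: (neqE _ E).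
  rewrite eq_sym; case: (H23 Hv Hu Nv Nu) => Hex; [exact: (d23 S Hy1 Hv Hz1 Hu Nv Nu Hex) | rewrite eq_sym; exact: (d23 S' Hz1 Hu Hy1 Hv Nu Nv Hex)].
- case: (eqVneq u v) => // Nuv; exfalso; apply: (neqE _ E).
  rewrite eq_sym; exact: (d42 S' Hx0 Hz0 Hz1 Hu H2 Nu).
- case: (eqVneq u v) => // Nuv; exfalso; apply: (neqE _ E).
  exact: (d22 S' Hz1 Hu Hv Nu Nv Nuv).
Qed.

Lemma star_count : #|T| <= #|lines e|.
Proof. exact: (count_inj fstar_inj fstar_lines). Qed.

End Star.

Section TwoTwoLemmas.
Variables (T : finType) (e : rel T) (X Y Z : {set T}).
Hypothesis S : setup e X Y Z.
Hypothesis NU : forall a b : T, a != b -> line e a b != [set: T].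
Let S' := setup_swap S.

Lemma dM01 x0 x z1 z2 y2 : x0 \in X -> x \in X -> x0 != x -> z1 \in Z -> z2 \in Z -> z1 != z2 ->
  y2 \in Y -> ~~ e x0 y2 -> (forall z, z \in Z -> e x0 z) -> line e x0 x != line e z1 z2.
Proof.
move=> Hx0 Hx Hxx Hz1 Hz2 Hzz Hy2 Hn Hf.
have [z Hz Hxz] := (s_Xn S Hx).2.
have Hc : close e x0 x by apply: (close_e (Hf z Hz)); rewrite (esym S).
apply: (neq_by (w := y2)).
by rewrite (F_XX_YZ S Hx0 Hx _ Hxx) ?(YnX S Hy2) // Hc (negbTE Hn) (F_YY_Z S' Hz1 Hz2 Hy2 Hzz).
Qed.

Lemma dP2W x0 y0 z0 z' : x0 \in X -> y0 \in Y -> z0 \in Z -> z' \in Z -> e x0 y0 -> e x0 z0 ->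
  line e x0 z0 != line e y0 z'.
Proof.
move=> Hx0 Hy0 Hz0 Hz' H1 H2; apply: (neq_by (w := y0)).
by rewrite (F_XYa_Z S' Hx0 Hz0 Hy0 H2) H1 (F_YZ_YZ S Hy0 Hz') ?(YnX S Hy0).
Qed.

Lemma dL1n x0 x y y' : x0 \in X -> x \in X -> x0 != x -> y \in Y -> y' \in Y ->
  ~~ e x0 y -> e x0 y' -> line e x0 x != line e x0 y.
Proof.
move=> Hx0 Hx Hxx Hy Hy' Hn Hp.
case Ec: (close e x0 x).
- apply: (neq_by (w := y)).
  by rewrite (F_XX_YZ S Hx0 Hx _ Hxx) ?(YnX S Hy) // Ec (negbTE Hn) (F_XYn_Y S Hx0 Hy Hy Hn) eqxx.
- apply: (neq_by (w := y')).
  rewrite (F_XX_YZ S Hx0 Hx _ Hxx) ?(YnX S Hy') // Ec Hp (F_XYn_Y S Hx0 Hy Hy' Hn).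
  have Hyy : y' != y by apply: contraNneq Hn => <-.
  by rewrite (negbTE Hyy).
Qed.

Lemma dW23 y1 z1 z2 : y1 \in Y -> z1 \in Z -> z2 \in Z -> z1 != z2 ->
  (forall z, z \in Z -> (z == z1) || (z == z2)) -> line e y1 z1 != line e y1 z2.
Proof.
move=> Hy1 Hz1 Hz2 Hzz HZ; apply/negP => /eqP E.
apply: (nuniv NU (a := z1) (b := z2)) => // w.
case: (partP S w) => Hw.
- move/setP: E => /(_ w); rewrite (F_YZ_X S Hy1 Hz1 Hw) (F_YZ_X S Hy1 Hz2 Hw) (F_YY_X S' Hz1 Hz2 Hw Hzz).
  have [z Hz Hwz] := (s_Xn S Hw).2.
  case/orP: (HZ z Hz) => /eqP Ez; move: Hwz; rewrite Ez => ->;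
    by case: (e w y1); case: (e w z1); case: (e w z2).
- exact: (F_YY_Z S' Hz1 Hz2 Hw Hzz).
- by rewrite (F_YY_Y S' Hz1 Hz2 Hw Hzz); apply: HZ.
Qed.

End TwoTwoLemmas.

Section SchemeM.
Variables (T : finType) (e : rel T) (X Y Z : {set T}).
Hypothesis S : setup e X Y Z.
Hypothesis NU : forall a b : T, a != b -> line e a b != [set: T].
Let S' := setup_swap S.
Variables (x0 y1 y2 z1 z2 : T).
Hypotheses (Hx0 : x0 \in X) (Hy1 : y1 \in Y) (Hy2 : y2 \in Y) (Hz1 : z1 \in Z) (Hz2 : z2 \in Z)
  (Hyy : y1 != y2) (Hzz : z1 != z2)
  (HY : forall v, v \in Y -> (v == y1) || (v == y2))
  (HZ : forall v, v \in Z -> (v == z1) || (v == z2)).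
Hypotheses (Ea : e x0 y1) (Nb : ~~ e x0 y2) (Ec : e x0 z1) (Ed : e x0 z2).

Lemma Hfull : forall z, z \in Z -> e x0 z.
Proof. by move=> z Hz; case/orP: (HZ Hz) => /eqP ->. Qed.

Lemma A04 : line e z1 z2 != line e y1 z1.
Proof.
apply: (neq_by (w := x0)).
by rewrite (F_YY_X S' Hz1 Hz2 Hx0 Hzz) (F_YZ_X S Hy1 Hz1 Hx0) Ea Ec Ed.
Qed.
Lemma A05 : line e z1 z2 != line e y1 z2.
Proof.
apply: (neq_by (w := x0)).
by rewrite (F_YY_X S' Hz1 Hz2 Hx0 Hzz) (F_YZ_X S Hy1 Hz2 Hx0) Ea Ec Ed.
Qed.

Variant Mcls (v : T) : {set T} -> Type :=
  | M0 of v = x0 : Mcls v (line e z1 z2)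
  | M1 of v \in X & x0 != v : Mcls v (line e x0 v)
  | M2 of v = y1 : Mcls v (line e x0 y1)
  | M3 of v = y2 : Mcls v (line e x0 z1)
  | M4 of v = z1 : Mcls v (line e y1 z1)
  | M5 of v = z2 : Mcls v (line e y1 z2).

Definition fM v :=
  if v == x0 then line e z1 z2 else if v \in X then line e x0 v
  else if v == y1 then line e x0 y1 else if v == y2 then line e x0 z1
  else if v == z1 then line e y1 z1 else line e y1 z2.

Lemma MP v : Mcls v (fM v).
Proof.
rewrite /fM; case: eqP => [->|/eqP H0]; first exact: M0.
case: ifP => HX; first by apply: M1; rewrite // eq_sym.
case: eqP => [->|/eqP H3]; first exact: M2.
case: eqP => [->|/eqP H4]; first exact: M3.
case: eqP => [->|/eqP H5]; first exact: M4.
apply: M5.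
case: (partP S v) => H; first by rewrite H in HX.
- by move: (HY H); rewrite (negbTE H3) (negbTE H4).
- by move: (HZ H); rewrite (negbTE H5) => /eqP.
Qed.


Lemma fM_lines v : fM v \in lines e.
Proof.
case: (MP v) => [_|H H'|_|_|_|_]; apply: line_in_lines => //.
- exact: (neqXY S Hx0 Hy1).
- exact: (neqXZ S Hx0 Hz1).
- exact: (neqYZ S Hy1 Hz1).
- exact: (neqYZ S Hy1 Hz2).
Qed.

Lemma eq_sym_neqM (u v : T) : u != v -> v != u.
Proof. by rewrite eq_sym. Qed.

Lemma fM_inj : injective fM.
Proof.
move=> u v; case: (MP u) => [Eu|Hu Nu|Eu|Eu|Eu|Eu];
  case: (MP v) => [Ev|Hv Nv|Ev|Ev|Ev|Ev] E.
- by rewrite Eu Ev.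
- case: (eqVneq u v) => // Nuv; exfalso; apply: (neqE _ E).
  rewrite eq_sym; exact: (dM01 S Hx0 Hv Nv Hz1 Hz2 Hzz Hy2 Nb Hfull).
- case: (eqVneq u v) => // Nuv; exfalso; apply: (neqE _ E).
  rewrite eq_sym; exact: (d43 S Hx0 Hy1 Hz1 Hz2 Ea Hzz).
- case: (eqVneq u v) => // Nuv; exfalso; apply: (neqE _ E).
  rewrite eq_sym; exact: (d42 S' Hx0 Hz1 Hz1 Hz2 Ec Hzz).
- case: (eqVneq u v) => // Nuv; exfalso; apply: (neqE _ E).
  exact: A04.
- case: (eqVneq u v) => // Nuv; exfalso; apply: (neqE _ E).
  exact: A05.
- case: (eqVneq u v) => // Nuv; exfalso; apply: (neqE _ E).
  exact: (dM01 S Hx0 Hu Nu Hz1 Hz2 Hzz Hy2 Nb Hfull).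
- case: (eqVneq u v) => // Nuv; exfalso; apply: (neqE _ E).
  exact: (d11 S Hx0 Hu Hv Nu Nv Nuv).
- case: (eqVneq u v) => // Nuv; exfalso; apply: (neqE _ E).
  exact: (d14 S Hx0 Hu Hy1 Nu Ea).
- case: (eqVneq u v) => // Nuv; exfalso; apply: (neqE _ E).
  exact: (d14 S' Hx0 Hu Hz1 Nu Ec).
- case: (eqVneq u v) => // Nuv; exfalso; apply: (neqE _ E).
  exact: (d16 S Hx0 Hu Hy1 Hz1 Nu Ea Ec).
- case: (eqVneq u v) => // Nuv; exfalso; apply: (neqE _ E).
  exact: (d16 S Hx0 Hu Hy1 Hz2 Nu Ea Ed).
- case: (eqVneq u v) => // Nuv; exfalso; apply: (neqE _ E).
  exact: (d43 S Hx0 Hy1 Hz1 Hz2 Ea Hzz).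
- case: (eqVneq u v) => // Nuv; exfalso; apply: (neqE _ E).
  rewrite eq_sym; exact: (d14 S Hx0 Hv Hy1 Nv Ea).
- by rewrite Eu Ev.
- case: (eqVneq u v) => // Nuv; exfalso; apply: (neqE _ E).
  exact: (d45 S Hx0 Hy1 Hz1 Ea Ec).
- case: (eqVneq u v) => // Nuv; exfalso; apply: (neqE _ E).
  exact: (d46 S Hx0 Hy1 Hz1 Ea Ec).
- case: (eqVneq u v) => // Nuv; exfalso; apply: (neqE _ E).
  exact: (d46 S Hx0 Hy1 Hz2 Ea Ed).
- case: (eqVneq u v) => // Nuv; exfalso; apply: (neqE _ E).
  exact: (d42 S' Hx0 Hz1 Hz1 Hz2 Ec Hzz).
- case: (eqVneq u v) => // Nuv; exfalso; apply: (neqE _ E).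
  rewrite eq_sym; exact: (d14 S' Hx0 Hv Hz1 Nv Ec).
- case: (eqVneq u v) => // Nuv; exfalso; apply: (neqE _ E).
  rewrite eq_sym; exact: (d45 S Hx0 Hy1 Hz1 Ea Ec).
- by rewrite Eu Ev.
- case: (eqVneq u v) => // Nuv; exfalso; apply: (neqE _ E).
  exact: (dP2W S Hx0 Hy1 Hz1 Hz1 Ea Ec).
- case: (eqVneq u v) => // Nuv; exfalso; apply: (neqE _ E).
  exact: (dP2W S Hx0 Hy1 Hz1 Hz2 Ea Ec).
- case: (eqVneq u v) => // Nuv; exfalso; apply: (neqE _ E).
  rewrite eq_sym; exact: A04.
- case: (eqVneq u v) => // Nuv; exfalso; apply: (neqE _ E).
  rewrite eq_sym; exact: (d16 S Hx0 Hv Hy1 Hz1 Nv Ea Ec).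
- case: (eqVneq u v) => // Nuv; exfalso; apply: (neqE _ E).
  rewrite eq_sym; exact: (d46 S Hx0 Hy1 Hz1 Ea Ec).
- case: (eqVneq u v) => // Nuv; exfalso; apply: (neqE _ E).
  rewrite eq_sym; exact: (dP2W S Hx0 Hy1 Hz1 Hz1 Ea Ec).
- by rewrite Eu Ev.
- case: (eqVneq u v) => // Nuv; exfalso; apply: (neqE _ E).
  exact: (dW23 S NU Hy1 Hz1 Hz2 Hzz HZ).
- case: (eqVneq u v) => // Nuv; exfalso; apply: (neqE _ E).
  rewrite eq_sym; exact: A05.
- case: (eqVneq u v) => // Nuv; exfalso; apply: (neqE _ E).
  rewrite eq_sym; exact: (d16 S Hx0 Hv Hy1 Hz2 Nv Ea Ed).
- case: (eqVneq u v) => // Nuv; exfalso; apply: (neqE _ E).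
  rewrite eq_sym; exact: (d46 S Hx0 Hy1 Hz2 Ea Ed).
- case: (eqVneq u v) => // Nuv; exfalso; apply: (neqE _ E).
  rewrite eq_sym; exact: (dP2W S Hx0 Hy1 Hz1 Hz2 Ea Ec).
- case: (eqVneq u v) => // Nuv; exfalso; apply: (neqE _ E).
  rewrite eq_sym; exact: (dW23 S NU Hy1 Hz1 Hz2 Hzz HZ).
- by rewrite Eu Ev.
Qed.

Lemma M_count : #|T| <= #|lines e|.
Proof. exact: (count_inj fM_inj fM_lines). Qed.

End SchemeM.

Section SchemeS.
Variables (T : finType) (e : rel T) (X Y Z : {set T}).
Hypothesis S : setup e X Y Z.
Hypothesis NU : forall a b : T, a != b -> line e a b != [set: T].
Let S' := setup_swap S.
Variables (x0 y1 y2 z1 z2 : T).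
Hypotheses (Hx0 : x0 \in X) (Hy1 : y1 \in Y) (Hy2 : y2 \in Y) (Hz1 : z1 \in Z) (Hz2 : z2 \in Z)
  (Hyy : y1 != y2) (Hzz : z1 != z2)
  (HY : forall v, v \in Y -> (v == y1) || (v == y2))
  (HZ : forall v, v \in Z -> (v == z1) || (v == z2)).
Hypotheses (Ea : e x0 y1) (Nb : ~~ e x0 y2) (Ec : e x0 z1) (Nd : ~~ e x0 z2).
Hypothesis NoMix : forall x, x \in X -> (e x y1 && e x y2) = (e x z1 && e x z2).
Hypothesis Hex : exists x, [/\ x \in X, x != x0 & e x z1].


Lemma B01 v : v \in X -> x0 != v -> line e x0 v != line e y1 y2.
Proof.
move=> Hv Nv; apply: (neq_by (w := x0)).
by rewrite (F_XX_X S Hx0 Hv Hx0 Nv) eqxx (F_YY_X S Hy1 Hy2 Hx0 Hyy) Ea (negbTE Nb).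
Qed.

Lemma B04 : line e y1 y2 != line e y1 z1.
Proof.
apply/negP => /eqP E.
apply: (nuniv NU (a := y1) (b := z2)); first exact: (neqYZ S Hy1 Hz2).
move=> w; case: (boolP (w \in X)) => Hw; last exact: (F_YZ_YZ S Hy1 Hz2).
move/setP: E => /(_ w); rewrite (F_YY_X S Hy1 Hy2 Hw Hyy) (F_YZ_X S Hy1 Hz1 Hw) (F_YZ_X S Hy1 Hz2 Hw).
have [v Hv Hwv] := (s_Xn S Hw).1.
have [z Hz Hwz] := (s_Xn S Hw).2.
have HyN : e w y1 || e w y2 by case/orP: (HY Hv) => /eqP Ev; rewrite -Ev Hwv ?orbT.
have HzN : e w z1 || e w z2 by case/orP: (HZ Hz) => /eqP Ez; rewrite -Ez Hwz ?orbT.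
move: (NoMix Hw) HyN HzN.
by case: (e w y1); case: (e w y2); case: (e w z1); case: (e w z2).
Qed.

Lemma B05 : line e y1 y2 != line e x0 y2.
Proof.
apply: (neq_by (w := z2)).
by rewrite (F_YY_Z S Hy1 Hy2 Hz2 Hyy) (F_XYn_Z S Hx0 Hy2 Hz2 Nb) (negbTE Nd).
Qed.

Lemma B25 : line e x0 y1 != line e x0 y2.
Proof.
apply: (neq_by (w := y1)).
by rewrite (F_XYa_Y S Hx0 Hy1 Hy1 Ea) Ea (F_XYn_Y S Hx0 Hy2 Hy1 Nb) (negbTE Hyy).
Qed.

Lemma B35 : line e x0 z1 != line e x0 y2.
Proof.
case: Hex => x [Hx Nx Hxz].
have Hc : close e x0 x by apply: (close_e Ec); rewrite (esym S).
apply: (neq_by (w := x)).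
rewrite (F_XYa_X S' Hx0 Hz1 Hx Ec) (F_XYn_X S Hx0 Hy2 Hx Nb) Hxz Hc (negbTE Nx).
by rewrite orbT andbF.
Qed.

Lemma B45 : line e y1 z1 != line e x0 y2.
Proof.
apply: (neq_by (w := z2)).
by rewrite (F_YZ_YZ S Hy1 Hz1) ?(ZnX S Hz2) // (F_XYn_Z S Hx0 Hy2 Hz2 Nb) (negbTE Nd).
Qed.

Variant Scls (v : T) : {set T} -> Type :=
  | S0 of v = x0 : Scls v (line e y1 y2)
  | S1 of v \in X & x0 != v : Scls v (line e x0 v)
  | S2 of v = y1 : Scls v (line e x0 y1)
  | S3 of v = y2 : Scls v (line e x0 z1)
  | S4 of v = z1 : Scls v (line e y1 z1)
  | S5 of v = z2 : Scls v (line e x0 y2).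

Definition fS v :=
  if v == x0 then line e y1 y2 else if v \in X then line e x0 v
  else if v == y1 then line e x0 y1 else if v == y2 then line e x0 z1
  else if v == z1 then line e y1 z1 else line e x0 y2.

Lemma SP v : Scls v (fS v).
Proof.
rewrite /fS; case: eqP => [->|/eqP H0]; first exact: S0.
case: ifP => HX; first by apply: S1; rewrite // eq_sym.
case: eqP => [->|/eqP H3]; first exact: S2.
case: eqP => [->|/eqP H4]; first exact: S3.
case: eqP => [->|/eqP H5]; first exact: S4.
apply: S5.
case: (partP S v) => H; first by rewrite H in HX.
- by move: (HY H); rewrite (negbTE H3) (negbTE H4).
- by move: (HZ H); rewrite (negbTE H5) => /eqP.
Qed.


Lemma fS_lines v : fS v \in lines e.
Proof.
case: (SP v) => [_|H H'|_|_|_|_]; apply: line_in_lines => //.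
- exact: (neqXY S Hx0 Hy1).
- exact: (neqXZ S Hx0 Hz1).
- exact: (neqYZ S Hy1 Hz1).
- exact: (neqXY S Hx0 Hy2).
Qed.

Lemma eq_sym_neqS (u v : T) : u != v -> v != u.
Proof. by rewrite eq_sym. Qed.

Lemma fS_inj : injective fS.
Proof.
move=> u v; case: (SP u) => [Eu|Hu Nu|Eu|Eu|Eu|Eu];
  case: (SP v) => [Ev|Hv Nv|Ev|Ev|Ev|Ev] E.
- by rewrite Eu Ev.
- case: (eqVneq u v) => // Nuv; exfalso; apply: (neqE _ E).
  rewrite eq_sym; exact: (B01 Hv Nv).
- case: (eqVneq u v) => // Nuv; exfalso; apply: (neqE _ E).
  rewrite eq_sym; exact: (d42 S Hx0 Hy1 Hy1 Hy2 Ea Hyy).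
- case: (eqVneq u v) => // Nuv; exfalso; apply: (neqE _ E).
  rewrite eq_sym; exact: (d43 S' Hx0 Hz1 Hy1 Hy2 Ec Hyy).
- case: (eqVneq u v) => // Nuv; exfalso; apply: (neqE _ E).
  exact: B04.
- case: (eqVneq u v) => // Nuv; exfalso; apply: (neqE _ E).
  exact: B05.
- case: (eqVneq u v) => // Nuv; exfalso; apply: (neqE _ E).
  exact: (B01 Hu Nu).
- case: (eqVneq u v) => // Nuv; exfalso; apply: (neqE _ E).
  exact: (d11 S Hx0 Hu Hv Nu Nv Nuv).
- case: (eqVneq u v) => // Nuv; exfalso; apply: (neqE _ E).
  exact: (d14 S Hx0 Hu Hy1 Nu Ea).
- case: (eqVneq u v) => // Nuv; exfalso; apply: (neqE _ E).
  exact: (d14 S' Hx0 Hu Hz1 Nu Ec).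
- case: (eqVneq u v) => // Nuv; exfalso; apply: (neqE _ E).
  exact: (d16 S Hx0 Hu Hy1 Hz1 Nu Ea Ec).
- case: (eqVneq u v) => // Nuv; exfalso; apply: (neqE _ E).
  exact: (dL1n S Hx0 Hu Nu Hy2 Hy1 Nb Ea).
- case: (eqVneq u v) => // Nuv; exfalso; apply: (neqE _ E).
  exact: (d42 S Hx0 Hy1 Hy1 Hy2 Ea Hyy).
- case: (eqVneq u v) => // Nuv; exfalso; apply: (neqE _ E).
  rewrite eq_sym; exact: (d14 S Hx0 Hv Hy1 Nv Ea).
- by rewrite Eu Ev.
- case: (eqVneq u v) => // Nuv; exfalso; apply: (neqE _ E).
  exact: (d45 S Hx0 Hy1 Hz1 Ea Ec).
- case: (eqVneq u v) => // Nuv; exfalso; apply: (neqE _ E).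
  exact: (d46 S Hx0 Hy1 Hz1 Ea Ec).
- case: (eqVneq u v) => // Nuv; exfalso; apply: (neqE _ E).
  exact: B25.
- case: (eqVneq u v) => // Nuv; exfalso; apply: (neqE _ E).
  exact: (d43 S' Hx0 Hz1 Hy1 Hy2 Ec Hyy).
- case: (eqVneq u v) => // Nuv; exfalso; apply: (neqE _ E).
  rewrite eq_sym; exact: (d14 S' Hx0 Hv Hz1 Nv Ec).
- case: (eqVneq u v) => // Nuv; exfalso; apply: (neqE _ E).
  rewrite eq_sym; exact: (d45 S Hx0 Hy1 Hz1 Ea Ec).
- by rewrite Eu Ev.
- case: (eqVneq u v) => // Nuv; exfalso; apply: (neqE _ E).
  exact: (dP2W S Hx0 Hy1 Hz1 Hz1 Ea Ec).
- case: (eqVneq u v) => // Nuv; exfalso; apply: (neqE _ E).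
  exact: B35.
- case: (eqVneq u v) => // Nuv; exfalso; apply: (neqE _ E).
  rewrite eq_sym; exact: B04.
- case: (eqVneq u v) => // Nuv; exfalso; apply: (neqE _ E).
  rewrite eq_sym; exact: (d16 S Hx0 Hv Hy1 Hz1 Nv Ea Ec).
- case: (eqVneq u v) => // Nuv; exfalso; apply: (neqE _ E).
  rewrite eq_sym; exact: (d46 S Hx0 Hy1 Hz1 Ea Ec).
- case: (eqVneq u v) => // Nuv; exfalso; apply: (neqE _ E).
  rewrite eq_sym; exact: (dP2W S Hx0 Hy1 Hz1 Hz1 Ea Ec).
- by rewrite Eu Ev.
- case: (eqVneq u v) => // Nuv; exfalso; apply: (neqE _ E).
  exact: B45.
- case: (eqVneq u v) => // Nuv; exfalso; apply: (neqE _ E).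
  rewrite eq_sym; exact: B05.
- case: (eqVneq u v) => // Nuv; exfalso; apply: (neqE _ E).
  rewrite eq_sym; exact: (dL1n S Hx0 Hv Nv Hy2 Hy1 Nb Ea).
- case: (eqVneq u v) => // Nuv; exfalso; apply: (neqE _ E).
  rewrite eq_sym; exact: B25.
- case: (eqVneq u v) => // Nuv; exfalso; apply: (neqE _ E).
  rewrite eq_sym; exact: B35.
- case: (eqVneq u v) => // Nuv; exfalso; apply: (neqE _ E).
  rewrite eq_sym; exact: B45.
- by rewrite Eu Ev.
Qed.

Lemma S_count : #|T| <= #|lines e|.
Proof. exact: (count_inj fS_inj fS_lines). Qed.

End SchemeS.

Lemma pick2 (T : finType) (P : {set T}) (p : pred T) a b :
  a \in P -> b \in P -> a != b -> (forall v, v \in P -> (v == a) || (v == b)) -> p a != p b ->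
  exists a', exists b', [/\ a' \in P, b' \in P, a' != b', (forall v, v \in P -> (v == a') || (v == b')) &
    p a' && ~~ p b'].
Proof.
move=> Ha Hb Hab HP Hp; case Ea: (p a).
- exists a, b; split => //; by move: Hp; rewrite Ea; case: (p b).
- exists b, a; split => //; first by rewrite eq_sym.
  + by move=> v Hv; rewrite orbC; apply: HP.
  + by move: Hp; rewrite Ea; case: (p b).
Qed.

Lemma pair_and (T : eqType) (p : pred T) a b c d : a != b ->
  (a == c) || (a == d) -> (b == c) || (b == d) -> p a && p b = p c && p d.
Proof.
move=> Nab /orP [/eqP Ea|/eqP Ea] /orP [/eqP Eb|/eqP Eb]; move: Nab; rewrite Ea Eb ?eqxx //.
by rewrite andbC.
Qed.

Lemma pair_or (T : eqType) (p : pred T) a b c d : a != b ->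
  (a == c) || (a == d) -> (b == c) || (b == d) -> p a || p b = p c || p d.
Proof.
move=> Nab /orP [/eqP Ea|/eqP Ea] /orP [/eqP Eb|/eqP Eb]; move: Nab; rewrite Ea Eb ?eqxx //.
by rewrite orbC.
Qed.

Section Final.
Variables (T : finType) (e : rel T) (X Y Z : {set T}).
Hypothesis S : setup e X Y Z.
Hypothesis NU : forall a b : T, a != b -> line e a b != [set: T].
Let S' := setup_swap S.

Lemma two_two y1 y2 z1 z2 : y1 \in Y -> y2 \in Y -> z1 \in Z -> z2 \in Z -> y1 != y2 -> z1 != z2 ->
  (forall v, v \in Y -> (v == y1) || (v == y2)) -> (forall v, v \in Z -> (v == z1) || (v == z2)) ->
  #|T| <= #|lines e|.
Proof.
move=> Hy1 Hy2 Hz1 Hz2 Hyy Hzz HY HZ.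
case: (pickP (fun x => [&& x \in X, e x y1 != e x y2, e x z1 & e x z2])) => [x /and4P [Hx Hm Ha Hb]|NoA].
  have [ya [yb [Hya Hyb Nab HYab /andP [Ea Nb]]]] := pick2 (p := e x) Hy1 Hy2 Hyy HY Hm.
  by apply: (M_count S NU (x0 := x) (y1 := ya) (y2 := yb) (z1 := z1) (z2 := z2)).
case: (pickP (fun x => [&& x \in X, e x z1 != e x z2, e x y1 & e x y2])) => [x /and4P [Hx Hm Ha Hb]|NoB].
  have [za [zb [Hza Hzb Nab HZab /andP [Ea Nb]]]] := pick2 (p := e x) Hz1 Hz2 Hzz HZ Hm.
  by apply: (M_count S' NU (x0 := x) (y1 := za) (y2 := zb) (z1 := y1) (z2 := y2)).
have Nbr : forall w, w \in X -> (e w y1 || e w y2) && (e w z1 || e w z2).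
  move=> w Hw; have [v Hv Hwv] := (s_Xn S Hw).1; have [z Hz Hwz] := (s_Xn S Hw).2.
  apply/andP; split.
  - by case/orP: (HY _ Hv) => /eqP Ev; rewrite -Ev Hwv ?orbT.
  - by case/orP: (HZ _ Hz) => /eqP Ez; rewrite -Ez Hwz ?orbT.
have NoMix : forall w, w \in X -> (e w y1 && e w y2) = (e w z1 && e w z2).
  move=> w Hw; move: (NoA w) (NoB w) (Nbr w Hw); rewrite Hw /=.
  by case: (e w y1); case: (e w y2); case: (e w z1); case: (e w z2).
case: (pickP (fun x => (x \in X) && ~~ [&& e x y1, e x y2, e x z1 & e x z2])) => [x /andP [Hx Hnf]|Full].
- have Hmy : e x y1 != e x y2.
    move: Hnf (Nbr x Hx) (NoMix x Hx).
    by case: (e x y1); case: (e x y2); case: (e x z1); case: (e x z2).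
  have Hmz : e x z1 != e x z2.
    move: Hnf (Nbr x Hx) (NoMix x Hx).
    by case: (e x y1); case: (e x y2); case: (e x z1); case: (e x z2).
  have [ya [yb [Hya Hyb Nyab HYab /andP [Ea Nb]]]] := pick2 (p := e x) Hy1 Hy2 Hyy HY Hmy.
  have [za [zb [Hza Hzb Nzab HZab /andP [Ec Nd]]]] := pick2 (p := e x) Hz1 Hz2 Hzz HZ Hmz.
  have NoMix' : forall w, w \in X -> (e w ya && e w yb) = (e w za && e w zb).
    move=> w Hw; rewrite (pair_and (e w) Nyab (HY _ Hya) (HY _ Hyb)).
    by rewrite (pair_and (e w) Nzab (HZ _ Hza) (HZ _ Hzb)) NoMix.
  case: (pickP (fun x' => [&& x' \in X, x' != x & e x' za])) => [x' /and3P [Hx' Nx' Ex']|NoZ].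
    apply: (S_count S NU (x0 := x) (y1 := ya) (y2 := yb) (z1 := za) (z2 := zb)) => //.
    by exists x'.
  case: (pickP (fun x' => [&& x' \in X, x' != x & e x' ya])) => [x' /and3P [Hx' Nx' Ex']|NoY].
    have NoMix'' : forall w, w \in X -> (e w za && e w zb) = (e w ya && e w yb).
      by move=> w Hw; rewrite NoMix'.
    apply: (S_count S' NU (x0 := x) (y1 := za) (y2 := zb) (z1 := ya) (z2 := yb)) => //.
    by exists x'.
  exfalso; apply: (nuniv NU (a := ya) (b := zb)); first exact: (neqYZ S Hya Hzb).
  move=> w; case: (boolP (w \in X)) => Hw; last exact: (F_YZ_YZ S Hya Hzb).
  rewrite (F_YZ_X S Hya Hzb Hw).
  case: (eqVneq w x) => [->|Nwx]; first by rewrite Ea (negbTE Nd).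
  have Hya0 : e w ya = false by move: (NoY w); rewrite Hw Nwx /=.
  have Hza0 : e w za = false by move: (NoZ w); rewrite Hw Nwx /=.
  case/andP: (Nbr w Hw) => HyN HzN.
  rewrite -(pair_or (e w) Nyab (HY _ Hya) (HY _ Hyb)) Hya0 /= in HyN.
  rewrite -(pair_or (e w) Nzab (HZ _ Hza) (HZ _ Hzb)) Hza0 /= in HzN.
  by rewrite Hya0 HzN.
- exfalso; apply: (nuniv NU (a := y1) (b := y2)) => // w.
  case: (partP S w) => Hw.
  + rewrite (F_YY_X S Hy1 Hy2 Hw Hyy).
    by move: (Full w); rewrite Hw /= => /negbFE /and4P [-> -> _ _].
  + by rewrite (F_YY_Y S Hy1 Hy2 Hw Hyy); apply: HY.
  + exact: (F_YY_Z S Hy1 Hy2 Hw Hyy).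
Qed.


Lemma finish x0 y0 z0 y1 z1 : x0 \in X -> y0 \in Y -> z0 \in Z -> e x0 y0 -> e x0 z0 ->
  y1 \in Y -> z1 \in Z ->
  [\/ ~~ e x0 y1, exists2 z, z \in Z & ~~ e x0 z | forall u w, u \in X -> w \notin X -> e u w] ->
  [\/ ~~ e x0 z1, exists2 y, y \in Y & ~~ e x0 y | forall u w, u \in X -> w \notin X -> e u w] ->
  #|T| <= #|lines e|.
Proof.
move=> Hx0 Hy0 Hz0 H1 H2 Hy1 Hz1 HC2 HC3.
case: (pickP (fun p : T * T => [&& p.1 \in Y, p.2 \in Z, y1 != p.1, z1 != p.2,
   ~~ [exists y'', [&& y'' \in Y, y'' != y1 & y'' != p.1]] &
   ~~ [exists z'', [&& z'' \in Z, z'' != z1 & z'' != p.2]]])) =>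
   [[y z] /and5P [Hy Hz Ny Nz /andP [Hny Hnz]]|H23].
- apply: (two_two (y1 := y1) (y2 := y) (z1 := z1) (z2 := z)) => //.
  + move=> v Hv; move/existsPn: Hny => /(_ v); rewrite Hv /=.
    by case: (v == y1); case: (v == y).
  + move=> v Hv; move/existsPn: Hnz => /(_ v); rewrite Hv /=.
    by case: (v == z1); case: (v == z).
- apply: (star_count S NU (x0 := x0) (y0 := y0) (z0 := z0) (y1 := y1) (z1 := z1)) => //.
  move=> y z Hy Hz Ny Nz; move: (H23 (y, z)); rewrite /= Hy Hz Ny Nz /=.
  case: (boolP [exists y'', [&& y'' \in Y, y'' != y1 & y'' != y]]) => [/existsP [y'' /and3P [? ? ?]] _|_].
    by left; exists y''.
  case: (boolP [exists z'', [&& z'' \in Z, z'' != z1 & z'' != z]]) => [/existsP [z'' /and3P [? ? ?]] _|_ //].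
  by right; exists z''.
Qed.

Lemma main_count : X != set0 -> #|T| <= #|lines e|.
Proof.
move=> /set0Pn [x1 Hx1].
case: (pickP (fun x => (x \in X) && [exists w, (w \notin X) && ~~ e x w])) => [x0 /andP [Hx0 /existsP [w /andP [Hw Nw]]]|Hall].
- have [y0 Hy0 H1] := (s_Xn S Hx0).1; have [z0 Hz0 H2] := (s_Xn S Hx0).2.
  case: (pickP (fun y => (y \in Y) && ~~ e x0 y)) => [y1 /andP [Hy1 Ny1]|HfY].
  + apply: (finish (x0 := x0) (y0 := y0) (z0 := z0) (y1 := y1) (z1 := z0)) => //.
    * by constructor 1.
    * by constructor 2; exists y1.
  + have HwZ : w \in Z.
      case: (partP S w) => // HwY; first by rewrite HwY in Hw.
      by move: (HfY w); rewrite HwY Nw.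
    apply: (finish (x0 := x0) (y0 := y0) (z0 := z0) (y1 := y0) (z1 := w)) => //.
    * by constructor 2; exists w.
    * by constructor 1.
- have Hfull : forall u w, u \in X -> w \notin X -> e u w.
    move=> u w Hu Hw; move: (Hall u); rewrite Hu /=; move/negbT/existsPn => /(_ w).
    by rewrite Hw /= => /negbNE.
  have [y0 Hy0 H1] := (s_Xn S Hx1).1; have [z0 Hz0 H2] := (s_Xn S Hx1).2.
  apply: (finish (x0 := x1) (y0 := y0) (z0 := z0) (y1 := y0) (z1 := z0)) => //.
  + by constructor 3.
  + by constructor 3.
Qed.

End Final.

Unset Implicit Arguments.
Set Strict Implicit.

Theorem proposition1 (T : finType) (e : rel T) (X Y Z : {set T}) :
  simple_graph e ->
  connected_graph e ->
  (* X, Y, Z partition V(G) into (nonempty) blocks *)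
  X != set0 -> Y != set0 -> Z != set0 ->
  [disjoint X & Y] -> [disjoint Y & Z] -> [disjoint X & Z] ->
  X :|: Y :|: Z = [set: T] ->
  stable e X -> stable e Y -> stable e Z ->
  (forall y z, y \in Y -> z \in Z -> e y z) ->
  (forall x, x \in X -> (exists2 y, y \in Y & e x y) /\ (exists2 z, z \in Z & e x z)) ->
  dBE_property e.
Proof.
move=> [Hsym Hirr] Hconn HX0 HY0 HZ0 HXY HYZ HXZ Hcov HsX HsY HsZ HYZe HXn.
have S : setup e X Y Z by split.
rewrite /dBE_property.
case: (boolP [exists a, exists b, (a != b) && universal_line e (line e a b)]).
- move=> /existsP [a /existsP [b /andP [Hab Hu]]]; left; exists a, b; split => //.
- move=> Hno; right; apply: (main_count S _ HX0) => a b Hab; apply/negP => Hu.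
  move/existsPn: Hno => /(_ a) /existsPn /(_ b).
  by rewrite Hab /universal_line Hu.
Qed.
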